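(* Let $p$ be a prime with $p\equiv 1\pmod 8$ and $p \equiv 2 \pmod 3$, and let $n\ge 2$ be an integer. Let $(\alpha,\beta,\kappa)\in\mathbb{Z}^3$ be nonzero integers such that: (B1) $\alpha$ and $\beta$ are odd and $\gcd(\alpha,3)=\gcd(\alpha,p)=\gcd(\alpha,\beta)=\gcd(\beta,p)=1$; (B2) for every odd prime $l\ne 3$ dividing $\alpha\beta$, $p$ is a square in $\mathbb{Q}_l^\times$; (B3) $v_3(\kappa)$ is an odd positive integer and $v_3(\kappa)<2n-1$; (B4) $\kappa\not\equiv 0 \pmod p$; (B5) for every odd prime $l\ne 3$ dividing $\kappa$, $p$ is a square in $\mathbb{Q}_l^\times$. Define $A = \frac{p\alpha^2-9\beta^2}{2}$, $B = 9(p\alpha^2-9\beta^2)\kappa^2$, $C = 9(p\alpha^2+9\beta^2)\kappa^2$, $D=\frac{p\alpha^2+9\beta^2}{2}$, $E = 81\alpha\beta\kappa^3$, $F = 18\alpha\beta\kappa$, $G = 3\alpha\beta$. Then $(A,B,C,D,E,F,G)$ satisfies Hypothesis FM with respect to $(p,n)$.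
   Context: $v_l$ denotes the $l$-adic valuation. Hypothesis FM. Let $p$ be a prime with $p\equiv 1 \pmod 8$ and $n\ge 1$ an integer. A septuple $(A,B,C,D,E,F,G)\in\mathbb{Z}^7$, not all zero, satisfies Hypothesis FM with respect to $(p,n)$ if: (A1) $B^2 - C^2 + 2pEF = 0$, $2AB - 2CD + pF^2 = 0$, and $A^2 - D^2 + pG^2 = 0$; (A2) for every odd prime $l$ with $l\ne 3$, $l\ne p$ and $l\mid E$: $p$ is a square in $\mathbb{Q}_l^\times$ or $v_l(E)-v_l(G)<6n$; (A3) $\gcd(A,D,G)=1$, $E\not\equiv 0 \pmod p$ and $G\not\equiv 0\pmod p$; (A4) for every odd prime $l$ with $l\ne 3$, $l\ne p$ and $l \mid \gcd(AC-BD,\ DE-CF,\ AE-BF)$: $p$ is a square in $\mathbb{Q}_l^\times$; (A5) there is an integer $H$ with $G - EH^6\equiv 0 \pmod p$ such that $A+\zeta BH^4$ is a quadratic non-residue in $\mathbb{F}_p^\times$ for every cube root of unity $\zeta\in\mathbb{F}_p^\times$; and, if $3$ is a quadratic non-residue in $\mathbb{F}_p^\times$, additionally: (A6) $v_3(E)-v_3(G)<6n$; (A7) $A+B\not\equiv 0\pmod 3$ and $G\equiv 0 \pmod 3$. *)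

(* Defs.v *)
From mathcomp Require Import all_boot all_order all_algebra.
Set Implicit Arguments. Unset Strict Implicit. Unset Printing Implicit Defensive.
Import Order.TTheory GRing.Theory Num.Theory.
Local Open Scope ring_scope.

(* l-adic valuation of an integer (for x <> 0); as an int so that
   differences of valuations are honest integers. *)
Definition vadic (l : nat) (x : int) : int := (logn l `|x|%N)%:Z.

(* For a nonzero integer a, being a square in Q_l^x is
   the same as being a square in Z_l (a square root y of a has
   v_l(y) = v_l(a)/2 >= 0), and by compactness of Z_l this is the same as
   being a square modulo l^k for every k. *)
Definition sq_Ql (l : nat) (a : int) : Prop :=
  forall k : nat, exists x : int, ((l ^ k)%N%:Z %| x ^+ 2 - a)%Z.

Definition toFp (p : nat) (z : int) : 'F_p := z%:~R.

Definition qnr (p : nat) (x : 'F_p) : Prop :=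
  x != 0 /\ ~ (exists y : 'F_p, y ^+ 2 = x).

Definition HypFM (p n : nat) (A B C D E F G : int) : Prop :=
  ~ (A = 0 /\ B = 0 /\ C = 0 /\ D = 0 /\ E = 0 /\ F = 0 /\ G = 0) /\
  [/\ B ^+ 2 - C ^+ 2 + 2 * p%:Z * E * F = 0,
      2 * A * B - 2 * C * D + p%:Z * F ^+ 2 = 0 &
      A ^+ 2 - D ^+ 2 + p%:Z * G ^+ 2 = 0] /\
  (forall l : nat, prime l -> odd l -> l != 3%N -> l != p ->
     (l%:Z %| E)%Z -> sq_Ql l p%:Z \/ vadic l E - vadic l G < (6 * n)%N%:Z) /\
  [/\ gcdz (gcdz A D) G = 1%N, ~~ (p%:Z %| E)%Z & ~~ (p%:Z %| G)%Z] /\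
  (forall l : nat, prime l -> odd l -> l != 3%N -> l != p ->
     (l%:Z %| gcdz (gcdz (A * C - B * D) (D * E - C * F)) (A * E - B * F))%Z ->
     sq_Ql l p%:Z) /\
  (exists H : int, (p%:Z %| G - E * H ^+ 6)%Z /\
     forall zeta : 'F_p, zeta != 0 -> zeta ^+ 3 = 1 ->
       qnr (toFp p A + zeta * toFp p B * toFp p H ^+ 4)) /\
  (qnr (toFp p 3) ->
     vadic 3 E - vadic 3 G < (6 * n)%N%:Z /\
     ~~ (3 %| A + B)%Z /\ (3 %| G)%Z).

(* Main.v *)
Require Import Defs.
From mathcomp Require Import all_boot all_order all_algebra all_field all_solvable.
From mathcomp Require Import zify ring.
Set Implicit Arguments. Unset Strict Implicit. Unset Printing Implicit Defensive.
Import Order.TTheory GRing.Theory Num.Theory.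
Local Open Scope ring_scope.

Lemma finF_card_gt1 (F : finFieldType) : (1 < #|F|)%N.
Proof. by rewrite (cardD1 (0:F)) (cardD1 (1:F)) !inE oner_neq0. Qed.

Lemma finF_fermat (F : finFieldType) (x : F) : x != 0 -> x ^+ #|F|.-1 = 1.
Proof.
move=> nx; have := expf_card x; rewrite -(prednK (ltnW (finF_card_gt1 F))) exprS => h.
by apply: (mulfI nx); rewrite h mulr1.
Qed.

Lemma fin_prim_root (F : finFieldType) : exists g : F, (#|F|.-1).-primitive_root g.
Proof.
have F1 : (1 < #|F|)%N.
  by rewrite (cardD1 (0:F)) (cardD1 (1:F)) !inE oner_neq0.
have /hasP[g _ Hg] : has (#|F|.-1).-primitive_root (enum (predC1 (0:F))).
  apply: has_prim_root.
- by rewrite -subn1 subn_gt0.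
- apply/allP => x; rewrite mem_enum !inE => nx.
  rewrite unity_rootE; apply/eqP.
  by rewrite finF_fermat.
- exact: enum_uniq.
- by rewrite -cardE cardC1.
by exists g.
Qed.

Section Euler.
Variables (p : nat) (pr : prime p) (op : odd p).

Lemma p_half : p.-1 = (p./2 * 2)%N.
Proof. by rewrite -{1}(odd_double_half p) op add1n /= muln2. Qed.

Lemma Fp_fermat (x : 'F_p) : x != 0 -> x ^+ p.-1 = 1.
Proof. by move=> nx; have := finF_fermat nx; rewrite card_Fp. Qed.

Lemma Fp_pm1 (x : 'F_p) : x != 0 -> x ^+ p./2 = 1 \/ x ^+ p./2 = -1.
Proof.
move=> nx; have := Fp_fermat nx; rewrite p_half exprM => /eqP.
by rewrite sqrf_eq1 => /orP[] /eqP; [left|right].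
Qed.

Lemma Fp_prim : exists g : 'F_p, (p.-1).-primitive_root g.
Proof. by have [g] := fin_prim_root ('F_p); rewrite card_Fp //; exists g. Qed.

Lemma euler (x : 'F_p) : x != 0 -> (exists y, y ^+ 2 = x) <-> x ^+ p./2 = 1.
Proof.
move=> nx; split.
  case=> y hy; have ny : y != 0 by apply: contraNneq nx => y0; rewrite -hy y0 expr0n.
  by rewrite -hy -exprM mulnC -p_half Fp_fermat.
move=> h; have [g Hg] := Fp_prim.
have [[i _] /= hi] := prim_rootP Hg (Fp_fermat nx); rewrite hi.
move: h; rewrite hi -exprM => /eqP; rewrite -(prim_order_dvd Hg) p_half.
have p2 : (0 < p./2)%N.
  by case: p pr op => [|[|[|q]]] //.
rewrite [(i * _)%N]mulnC dvdn_pmul2l // => /dvdnP[j ->].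
by exists (g ^+ j); rewrite -exprM mulnC.
Qed.

Lemma Fp_nonsq : exists g : 'F_p, g != 0 /\ g ^+ p./2 = -1.
Proof.
have [g Hg] := Fp_prim.
have p2 : (0 < p./2)%N by case: p pr op => [|[|[|q]]] //.
have g0 : g != 0.
  apply/negP => /eqP g0; have := prim_expr_order Hg; rewrite g0 expr0n.
  by case: (p.-1) (prim_order_gt0 Hg) => // _ /eqP; rewrite eq_sym oner_eq0.
exists g; split => //; case: (Fp_pm1 g0) => // /eqP.
rewrite -(prim_order_dvd Hg) p_half => /dvdn_leq => /(_ p2).
lia.
Qed.

End Euler.

Lemma one_neq_m1 (R : fieldType) (q : nat) : q \in [pchar R] -> odd q -> (1 : R) != -1.
Proof.
move=> chR oq; apply/negP => /eqP h.
have : (2%:R : R) == 0 by rewrite -[2%N]/(1+1)%N natrD {2}h subrr.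
rewrite -(dvdn_pcharf chR) => d2.
have pq := pcharf_prime chR.
have := dvdn_leq (isT : (0 < 2)%N) d2; have := prime_gt1 pq.
by case: q oq pq chR d2 => [|[|[|]]].
Qed.

Lemma natr_eq1_pchar (R : fieldType) (q n : nat) : q \in [pchar R] -> (0 < n)%N ->
  ((n%:R : R) == 1) = (q %| n.-1)%N.
Proof.
move=> chR n0; rewrite (dvdn_pcharf chR) -{1}(prednK n0) -addn1 natrD.
by rewrite -subr_eq0 addrK.
Qed.

Section Gauss.
Variables (p l : nat) (F : fieldType) (z : F).
Hypotheses (pr : prime p) (p4 : (p %% 4 = 1)%N) (chF : l \in [pchar F]) (ol : odd l)
  (pl : p != l) (Hz : p.-primitive_root z).

Let op : odd p. Proof. lia. Qed.
Let prl : prime l. Proof. exact: pcharf_prime chF. Qed.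

Definition chi (a : 'F_p) : F := if a == 0 then 0 else if a ^+ p./2 == 1 then 1 else -1.
Definition psi (a : 'F_p) : F := z ^+ (nat_of_ord a).

Let F1 : (1 : F) != -1. Proof. exact: one_neq_m1 chF ol. Qed.
Let Fp1 : (1 : 'F_p) != -1. Proof. exact: one_neq_m1 (pchar_Fp pr) op. Qed.
Let Fpm1 : (-1 : 'F_p) != 1. Proof. by rewrite eq_sym. Qed.

Lemma chi_mul a b : chi (a * b) = chi a * chi b.
Proof.
rewrite /chi mulf_eq0; case: (eqVneq a 0) => [->|a0]. by rewrite !mul0r.
case: (eqVneq b 0) => [->|b0]; first by rewrite !mulr0 orbT.
rewrite /= exprMn.
case: (Fp_pm1 pr op a0) => ->;
case: (Fp_pm1 pr op b0) => ->;
by rewrite ?mulr1 ?mul1r ?mulN1r ?opprK ?eqxx ?(negbTE Fpm1) ?mulr1 ?mulN1r ?opprK.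
Qed.

Lemma chi_sq a : a != 0 -> chi a * chi a = 1.
Proof. by rewrite /chi => /negbTE ->; case: ifP; rewrite ?mulr1 ?mulrNN ?mulr1. Qed.

Lemma chi0 : chi 0 = 0. Proof. by rewrite /chi eqxx. Qed.

Lemma chi_sum : \sum_a chi a = 0.
Proof.
have [g [g0 hg]] := Fp_nonsq pr op.
have cg : chi g = -1 by rewrite /chi (negbTE g0) hg (negbTE Fpm1).
have : \sum_a chi a = - \sum_a chi a.
  rewrite {1}(reindex_inj (mulfI g0)) /= -mulN1r mulr_sumr.
  by apply: eq_bigr => a _; rewrite chi_mul cg.
move/eqP; rewrite -subr_eq0 opprK => /eqP.
rewrite -mulr2n -mulr_natr => /eqP; rewrite mulf_eq0 => /orP[/eqP //|].
by rewrite -(dvdn_pcharf chF) => /(dvdn_leq (isT : (0<2)%N)); case: l ol prl => [|[|[|]]].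
Qed.

Let zN : z ^+ (Zp_trunc (pdiv p)).+2 = 1.
Proof. by rewrite Fp_cast // prim_expr_order. Qed.

Lemma psiD a b : psi (a + b) = psi a * psi b.
Proof. by rewrite /psi -exprD -[RHS](expr_mod _ zN). Qed.

Lemma psi0 : psi 0 = 1. Proof. by rewrite /psi expr0. Qed.

Lemma psi_sum : \sum_a psi a = 0.
Proof.
have := subrX1 z (Zp_trunc (pdiv p)).+2; rewrite zN subrr => /esym/eqP.
rewrite mulf_eq0 subr_eq0 => /orP[/eqP z1|/eqP //].
have := prim_order_dvd Hz 1; rewrite expr1 z1 eqxx dvdn1 => /eqP p1.
exfalso; by move: (prime_gt1 pr); rewrite p1.
Qed.

Lemma psiT t : \sum_a psi (a * t) = if t == 0 then (p%:R : F) else 0.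
Proof.
case: eqP => [->|/eqP t0].
  under eq_bigr do rewrite mulr0 psi0.
  by rewrite sumr_const card_Fp.
by rewrite /= -[RHS]psi_sum [RHS](reindex_inj (mulIf t0)).
Qed.

Definition gauss := \sum_a chi a * psi a.

Lemma chim1 : chi (-1) = 1.
Proof.
rewrite /chi oppr_eq0 oner_eq0 -signr_odd.
by have -> : odd p./2 = false by lia.
Qed.

Lemma gauss_sq : gauss * gauss = p%:R.
Proof.
rewrite /gauss mulr_suml.
transitivity (\sum_a \sum_c chi c * psi (a * (1 + c))).
  apply: eq_bigr => a _; rewrite mulr_sumr.
  case: (eqVneq a 0) => [->|a0].
    rewrite chi0; under eq_bigr do rewrite mul0r mul0r.
    by rewrite big1 //; under eq_bigr do rewrite mul0r psi0 mulr1; rewrite chi_sum.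
  rewrite (reindex_inj (mulfI a0)) /=; apply: eq_bigr => c _.
  rewrite chi_mul mulrDr mulr1 psiD.
  transitivity ((chi a * chi a) * (chi c * (psi a * psi (a * c)))); first by ring.
  by rewrite chi_sq // mul1r.
rewrite exchange_big /=.
under eq_bigr do rewrite -mulr_sumr psiT.
rewrite (bigD1 (-1)) //= subrr eqxx chim1 mul1r big1 ?addr0 // => c c1.
by rewrite addrC addr_eq0 (negbTE c1) mulr0.
Qed.


Lemma chi_pow a : chi a ^+ l = chi a.
Proof.
rewrite /chi; case: ifP => _; first by rewrite expr0n gtn_eqF ?prime_gt0.
case: ifP => _; first by rewrite expr1n.
by rewrite -signr_odd ol expr1.
Qed.

Lemma psi_pow a : psi a ^+ l = psi (l%:R * a).
Proof.
rewrite mulr_natl; elim: l => [|n IH]; first by rewrite mulr0n psi0 expr0.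
by rewrite mulrS psiD -IH exprS.
Qed.

Let L0 : (l%:R : 'F_p) != 0.
Proof. by rewrite -(dvdn_pcharf (pchar_Fp pr)) dvdn_prime2. Qed.

Lemma chiV x : x != 0 -> chi (x^-1) = chi x.
Proof.
move=> x0; have h : chi x * chi (x^-1) = 1.
  by rewrite -chi_mul mulfV // /chi oner_eq0 expr1n eqxx.
by rewrite -[LHS]mul1r -(chi_sq x0) -mulrA h mulr1.
Qed.

Lemma gauss_frob : gauss ^+ l = chi (l%:R) * gauss.
Proof.
have -> : gauss ^+ l = pFrobenius_aut chF gauss by rewrite pFrobenius_autE.
rewrite /gauss rmorph_sum /=.
under eq_bigr do rewrite rmorphM /= !pFrobenius_autE chi_pow psi_pow.
rewrite (reindex_inj (mulfI (invr_neq0 L0))) mulr_sumr; apply: eq_bigr => b _ /=.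
by rewrite [l%:R * _]mulrA mulfV // mul1r chi_mul chiV // mulrA.
Qed.

Lemma gauss_main : chi (l%:R) = (p ^ l./2)%:R.
Proof.
have pF : (p%:R : F) != 0.
  by rewrite -(dvdn_pcharf chF) dvdn_prime2 // eq_sym.
have g0 : gauss != 0 by apply: contraNneq pF => g0; rewrite -gauss_sq g0 mul0r.
have := gauss_frob; rewrite -{1}(odd_double_half l) ol add1n exprS mulrC.
move/(mulIf g0) => <-; by rewrite -muln2 mulnC exprM expr2 gauss_sq natrX.
Qed.

End Gauss.

Lemma qr_recip (p l : nat) : prime p -> (p %% 4 = 1)%N -> prime l -> odd l -> p != l ->
  (exists y : 'F_p, y ^+ 2 = l%:R) <-> (exists w : 'F_l, w ^+ 2 = p%:R).
Proof.
move=> pr p4 prl ol pl.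
have op : odd p by lia.
have L0 : (l%:R : 'F_p) != 0 by rewrite -(dvdn_pcharf (pchar_Fp pr)) dvdn_prime2.
have P0 : (p%:R : 'F_l) != 0 by rewrite -(dvdn_pcharf (pchar_Fp prl)) dvdn_prime2 // eq_sym.
have p1 : (0 < p.-1)%N by have := prime_gt1 pr; lia.
have [K chK cK] := pPrimePowerField prl p1.
have [g Hg] := fin_prim_root K.
have pd : (p %| #|K|.-1)%N.
  rewrite cK -(natr_eq1_pchar (pchar_Fp pr)) ?expn_gt0 ?prime_gt0 //.
  by rewrite natrX Fp_fermat.
have Hz : p.-primitive_root (g ^+ (#|K|.-1 %/ p)) := dvdn_prim_root Hg pd.
have := gauss_main pr p4 chK ol pl Hz; rewrite /chi (negbTE L0) => h.
have e1 : ((p ^ l./2)%:R == 1 :> K) = ((p%:R : 'F_l) ^+ l./2 == 1).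
  rewrite -natrX (natr_eq1_pchar chK) ?expn_gt0 ?prime_gt0 //.
  by rewrite (natr_eq1_pchar (pchar_Fp prl)) ?expn_gt0 ?prime_gt0.
rewrite (euler pr op L0) (euler prl ol P0).
split => [hL|hP].
  by apply/eqP; rewrite -e1 -h hL eqxx.
move: h; case: eqP => // _ h; exfalso.
move: e1; rewrite -h hP eqxx => /eqP.
by apply/eqP; rewrite eq_sym; apply: one_neq_m1 chK ol.
Qed.

Section Spec.
Variables (p : nat) (pr : prime p) (p8 : (p %% 8 = 1)%N) (p3 : (p %% 3 = 2)%N).
Let op : odd p. Proof. lia. Qed.
Let p4 : (p %% 4 = 1)%N. Proof. lia. Qed.

Lemma sq_m1 : exists y : 'F_p, y ^+ 2 = -1.
Proof.
apply/(euler pr op); first by rewrite oppr_eq0 oner_eq0.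
by rewrite -signr_odd; have -> : odd p./2 = false by lia.
Qed.

Lemma sq_2 : exists y : 'F_p, y ^+ 2 = 2%:R.
Proof.
have [g Hg] := Fp_prim pr.
have d8 : (8 %| p.-1)%N by apply/dvdnP; exists (p %/ 8)%N; lia.
have Hw := dvdn_prim_root Hg d8; set w := g ^+ _ in Hw.
have w8 : w ^+ 8 = 1 := prim_expr_order Hw.
have w4 : w ^+ 4 = -1.
  have : (w ^+ 4) ^+ 2 == 1 by rewrite -exprM w8.
  rewrite sqrf_eq1 => /orP[|/eqP //].
  by rewrite -(prim_order_dvd Hw).
exists (w + w ^+ 7); apply/eqP; rewrite -subr_eq0.
have -> : (w + w ^+ 7) ^+ 2 - 2%:R = w ^+ 2 * (1 + w ^+ 4) + (2%:R + w ^+ 6) * (w ^+ 8 - 1).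
  by ring.
by rewrite w4 w8 !subrr !mulr0 addr0.
Qed.

Lemma nsq_3 : ~ exists y : 'F_p, y ^+ 2 = 3%:R.
Proof.
have p3' : p != 3%N by apply/eqP => e; move: p3; rewrite e.
rewrite (qr_recip pr p4 (isT : prime 3) (isT : odd 3) p3').
rewrite -Fp_nat_mod // p3.
by case=> w; case: w => [[|[|[|]]] ?].
Qed.

Lemma sq_prime (q : nat) : prime q -> odd q -> q != p ->
  (exists x : int, (q%:Z %| x ^+ 2 - p%:Z)%Z) -> exists y : 'F_p, y ^+ 2 = q%:R.
Proof.
move=> prq oq qp [x hx].
have pq : p != q by rewrite eq_sym.
apply/(qr_recip pr p4 prq oq pq); exists (x%:~R).
move: hx; rewrite (dvdz_pcharf (pchar_Fp prq)) rmorphB rmorphXn /= subr_eq0 => /eqP ->.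
by [].
Qed.

Lemma cube1 (z : 'F_p) : z ^+ 3 = 1 -> z = 1.
Proof.
move=> z3; have z0 : z != 0 by apply/eqP => e; move: z3; rewrite e expr0n => /eqP; rewrite eq_sym oner_eq0.
have := Fp_fermat pr z0; have -> : p.-1 = (3 * (p %/ 3) + 1)%N by lia.
by rewrite exprD exprM z3 expr1n mul1r expr1.
Qed.


Lemma sq_nat (m : nat) : (0 < m)%N -> ~~ (p %| m)%N -> ~~ (3 %| m)%N ->
  (forall q, prime q -> (q %| m)%N -> odd q -> q != 3%N ->
     exists x : int, (q%:Z %| x ^+ 2 - p%:Z)%Z) ->
  exists y : 'F_p, y ^+ 2 = m%:R.
Proof.
elim/ltn_ind: m => m IH m0 pm tm H.
case: (ltngtP m 1) => [|m1|->]; first by lia.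
  2: by exists 1; rewrite expr1n.
set q := pdiv m; have prq : prime q := pdiv_prime m1.
have qm : (q %| m)%N := pdiv_dvd m.
have em : m = (m %/ q * q)%N by rewrite divnK.
have q1 := prime_gt1 prq.
have [y1 h1] : exists y : 'F_p, y ^+ 2 = (m %/ q)%:R.
  apply: IH.
  - exact: ltn_Pdiv.
  - by rewrite divn_gt0 ?prime_gt0 // dvdn_leq.
  - by apply: contra pm => h; rewrite em dvdn_mulr.
  - by apply: contra tm => h; rewrite em dvdn_mulr.
  - by move=> r prr rd; apply: H => //; rewrite em dvdn_mulr.
have [y2 h2] : exists y : 'F_p, y ^+ 2 = q%:R.
  case: (even_prime prq) => [q2|oq].
    by rewrite q2; exact: sq_2.
  have q3 : q != 3%N by apply: contraNneq tm => <-.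
  have qp : q != p by apply: contraNneq pm => <-.
  by apply: sq_prime => //; apply: H.
by exists (y1 * y2); rewrite exprMn h1 h2 -natrM -em.
Qed.

Lemma Fp3 : (3%:R : 'F_p) != 0.
Proof.
rewrite -(dvdn_pcharf (pchar_Fp pr)) dvdn_prime2 //.
by apply/eqP => e; move: p3; rewrite e.
Qed.

Lemma sq_3k (k : int) : k != 0 -> ~~ (p%:Z %| k)%Z -> odd (logn 3 `|k|) ->
  (forall q : nat, prime q -> odd q -> q != 3%N -> (q%:Z %| k)%Z -> sq_Ql q p%:Z) ->
  exists w : 'F_p, w != 0 /\ 3%:R * k%:~R = w ^+ 2.
Proof.
move=> k0 pk ov Hq.
have k0' : (0 < `|k|)%N by rewrite absz_gt0.
have [m cm hk] := pfactor_coprime (isT : prime 3) k0'.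
set v := logn 3 `|k| in hk ov.
have [s hs] : exists s : 'F_p, s ^+ 2 = m%:R.
  apply: sq_nat.
  - by move: k0'; rewrite hk muln_gt0 => /andP[].
  - by apply: contra pk => h; rewrite dvdzE /= hk dvdn_mulr.
  - by rewrite -prime_coprime.
  - move=> q prq qm oq q3.
    have qk : (q%:Z %| k)%Z by rewrite dvdzE /= hk dvdn_mulr.
    by have [x hx] := Hq q prq oq q3 qk 1%N; exists x; rewrite expn1 in hx.
have [c hc] : exists c : 'F_p, c ^+ 2 = (-1) ^+ (k < 0)%R.
  case: (k < 0)%R; first exact: sq_m1.
  by exists 1; rewrite expr1n expr0.
have kne : (k%:~R : 'F_p) != 0 by rewrite -(dvdz_pcharf (pchar_Fp pr)).
suff e : 3%:R * k%:~R = (c * s * 3%:R ^+ (v.+1)./2) ^+ 2.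
  exists (c * s * 3%:R ^+ (v.+1)./2); split => //.
  apply/negP => /eqP w0; move: e; rewrite w0 expr0n /= => /eqP.
  by rewrite mulf_eq0 (negbTE Fp3) (negbTE kne).
rewrite {1}[k]intEsign rmorphM rmorphXn rmorphN1 /= -pmulrn hk natrM natrX.
rewrite !exprMn hc hs -exprM.
have -> : ((v.+1)./2 * 2 = v.+1)%N by lia.
rewrite exprS; ring.
Qed.

End Spec.

Lemma pdvdM (q : nat) (x y : int) : prime q ->
  (q%:Z %| x * y)%Z = (q%:Z %| x)%Z || (q%:Z %| y)%Z.
Proof. by move=> pq; rewrite !dvdzE abszM Euclid_dvdM. Qed.

Lemma pdvdX (q n : nat) (x : int) : prime q -> (q%:Z %| x ^+ n)%Z -> (q%:Z %| x)%Z.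
Proof. by move=> pq; rewrite !dvdzE abszX Euclid_dvdX // => /andP[]. Qed.

Lemma pdvd3 (q j : nat) : prime q -> (q%:Z %| 3 ^+ j)%Z -> q = 3%N.
Proof.
move=> pq /(pdvdX pq); rewrite dvdzE /= => h.
by apply/eqP; rewrite -dvdn_prime2.
Qed.

Lemma pdvd_gcd (q : nat) (x y : int) : prime q -> gcdz x y = 1%N ->
  (q%:Z %| x)%Z -> (q%:Z %| y)%Z -> False.
Proof.
move=> pq g hx hy.
have : (q%:Z %| gcdz x y)%Z by rewrite dvdz_gcd hx hy.
by rewrite g dvdzE /= dvdn1 => /eqP q1; move: pq; rewrite q1.
Qed.

Lemma pdvd_self (q : nat) : (q%:Z %| q%:Z)%Z. Proof. exact: dvdzz. Qed.

Lemma Fp2 (p : nat) : prime p -> (p %% 8 = 1)%N -> (2%:R : 'F_p) != 0.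
Proof.
move=> pr p8; rewrite -(dvdn_pcharf (pchar_Fp pr)); apply/negP => /(dvdn_leq (isT : (0 < 2)%N)).
by have := prime_gt1 pr; lia.
Qed.

Lemma intrX' (R : pzRingType) (x : int) (n : nat) : (x ^+ n)%:~R = (x%:~R : R) ^+ n.
Proof. by rewrite rmorphXn. Qed.
Lemma intrZ (R : pzRingType) (n : nat) : (n%:Z)%:~R = n%:R :> R.
Proof. by []. Qed.
Lemma intrR (R : pzRingType) (n : nat) : ((n%:R : int))%:~R = n%:R :> R.
Proof. by rewrite natz. Qed.

Lemma F2_1 (x : 'F_2) : x != 0 -> x = 1.
Proof. by case: x => [[|[|//]]] i //= _; apply/val_inj. Qed.

Lemma two_dvd (p : nat) (a b : int) : odd p -> ~~ (2 %| a)%Z -> ~~ (2 %| b)%Z ->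
  (2 %| p%:Z * a ^+ 2 - 9 * b ^+ 2)%Z /\ (2 %| p%:Z * a ^+ 2 + 9 * b ^+ 2)%Z.
Proof.
have c2 := pchar_Fp (isT : prime 2).
move=> op; rewrite !(dvdz_pcharf c2) => /F2_1 ha /F2_1 hb.
rewrite !(intrB, intrD, intrM, intrX', intrZ, intrR) ha hb -Fp_nat_mod // modn2 op.
by split.
Qed.

Lemma main_gen (p n : nat) (alpha beta kappa A D : int) :
  prime p -> (p %% 8 = 1)%N -> (p %% 3 = 2)%N -> (2 <= n)%N ->
  alpha != 0 -> beta != 0 -> kappa != 0 ->
  gcdz alpha 3 = 1%N -> gcdz alpha p%:Z = 1%N -> gcdz alpha beta = 1%N ->
  gcdz beta p%:Z = 1%N ->
  (forall l : nat, prime l -> odd l -> l != 3%N ->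
     (l%:Z %| alpha * beta)%Z -> sq_Ql l p%:Z) ->
  odd (logn 3 `|kappa|) -> (0 < logn 3 `|kappa|)%N ->
  (logn 3 `|kappa| < 2 * n - 1)%N ->
  ~~ (p%:Z %| kappa)%Z ->
  (forall l : nat, prime l -> odd l -> l != 3%N ->
     (l%:Z %| kappa)%Z -> sq_Ql l p%:Z) ->
  p%:Z * alpha ^+ 2 - 9 * beta ^+ 2 = A * 2 ->
  p%:Z * alpha ^+ 2 + 9 * beta ^+ 2 = D * 2 ->
  HypFM p n A
    (9 * (p%:Z * alpha ^+ 2 - 9 * beta ^+ 2) * kappa ^+ 2)
    (9 * (p%:Z * alpha ^+ 2 + 9 * beta ^+ 2) * kappa ^+ 2)
    D
    (81 * alpha * beta * kappa ^+ 3)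
    (18 * alpha * beta * kappa)
    (3 * alpha * beta).
Proof.
move=> pr p8 p3 n2 a0 b0 k0 ga3 gap gab gbp B2 ov v0 vn pk B5 hS hT.
rewrite hS hT.
set a := alpha; set b := beta; set k := kappa; set P := p%:Z.
have two0 : (2 : int) != 0 by [].
have hAD1 : A + D = P * a ^+ 2.
  by apply: (mulIf two0); rewrite mulrDl -hS -hT; ring.
have hAD2 : D - A = 9 * b ^+ 2.
  by apply: (mulIf two0); rewrite mulrBl -hS -hT; ring.
have key : A ^+ 2 - D ^+ 2 + P * (3 * a * b) ^+ 2 = 0.
  have -> : A ^+ 2 - D ^+ 2 + P * (3 * a * b) ^+ 2 =
     (A + D) * (A - D) + (P * a ^+ 2) * (9 * b ^+ 2) by ring.
  rewrite hAD1 -hAD2; ring.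
have gen : forall c X : int, X = c * (A ^+ 2 - D ^+ 2 + P * (3 * a * b) ^+ 2) -> X = 0.
  by move=> c X ->; rewrite key mulr0.
have p3' : p != 3%N by apply/eqP => e; move: p3; rewrite e.
have AD_prime : forall q : nat, prime q -> (q%:Z %| A)%Z -> (q%:Z %| D)%Z -> False.
  move=> q pq qA qD.
  have h1 : (q%:Z %| P * a ^+ 2)%Z by rewrite -hAD1 rpredD.
  have h2 : (q%:Z %| 9 * b ^+ 2)%Z by rewrite -hAD2 rpredB.
  move: h1; rewrite pdvdM // => /orP[qP|/(pdvdX pq) qa].
    have qp : q = p by apply/eqP; rewrite -dvdn_prime2.
    move: h2; rewrite (_ : 9 = 3 ^+ 2) // pdvdM // => /orP[/(pdvd3 pq) q3|/(pdvdX pq) qb].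
      by move: p3'; rewrite -qp q3.
    by apply: (pdvd_gcd pq gbp qb); rewrite qp.
  move: h2; rewrite (_ : 9 = 3 ^+ 2) // pdvdM // => /orP[/(pdvd3 pq) q3|/(pdvdX pq) qb].
    by apply: (pdvd_gcd pq ga3 qa); rewrite q3.
  exact: (pdvd_gcd pq gab qa qb).
split.
  case=> _ [_ [_ [_ [_ [_]]]]] /eqP; rewrite !mulf_eq0 (negbTE a0) (negbTE b0) orbF.
  by [].
split.
  split.
  - apply: (gen (324 * k ^+ 4)); ring.
  - apply: (gen (36 * k ^+ 2)); ring.
  - exact: key.
have eE : 81 * a * b * k ^+ 3 = 3 ^+ 4 * (a * b) * k ^+ 3 by ring.
split.
  move=> l pl ol l3 lp; rewrite eE pdvdM // pdvdM // => /orP[/orP[/(pdvd3 pl) e|lab]|/(pdvdX pl) lk].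
  - by rewrite e eqxx in l3.
  - by left; apply: B2.
  - by left; apply: B5.
have pP : prime p := pr.
split.
  split.
  - apply/eqP; rewrite /gcdz /=; apply/eqP; congr Posz.
    set g := gcdn _ _.
    have : g = gcdn 1 `|3 * a * b| .
      congr gcdn; rewrite /g.
      case: (ltngtP (gcdn `|A| `|D|) 1) => [|g1|//].
        rewrite ltnS leqn0 -[_ == 0%N]negbK -lt0n gcdn_gt0 !absz_gt0 negb_or !negbK => /andP[/eqP A0 /eqP D0].
        move: hAD1; rewrite A0 D0 add0r => /esym/eqP; rewrite mulf_eq0 expf_eq0 /=.
        by rewrite (negbTE a0) orbF; move: (prime_gt0 pr); rewrite /P; case: (p).
      exfalso; have pq := pdiv_prime g1.
      apply: (AD_prime _ pq).
        by rewrite dvdzE /=; apply: dvdn_trans (pdiv_dvd _) (dvdn_gcdl _ _).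
      by rewrite dvdzE /=; apply: dvdn_trans (pdiv_dvd _) (dvdn_gcdr _ _).
    by rewrite gcd1n.
  - apply/negP; rewrite eE pdvdM // pdvdM // => /orP[/orP[/(pdvd3 pP) e|]|/(pdvdX pP) pk'].
    + by rewrite e eqxx in p3'.
    + rewrite pdvdM // => /orP[pa|pb].
        by apply: (pdvd_gcd pP gap pa); apply: dvdzz.
      by apply: (pdvd_gcd pP gbp pb); apply: dvdzz.
    + by rewrite pk' in pk.
  - rewrite (_ : 3 * a * b = 3 ^+ 1 * (a * b)); last by ring.
    apply/negP; rewrite pdvdM // pdvdM // => /orP[/(pdvd3 pP) e|/orP[pa|pb]].
    + by rewrite e eqxx in p3'.
    + by apply: (pdvd_gcd pP gap pa); apply: dvdzz.
    + by apply: (pdvd_gcd pP gbp pb); apply: dvdzz.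
split.
  move=> l pl ol l3 lp.
  rewrite !dvdz_gcd => /andP[/andP[_ hY] hZ].
  case: (boolP (l%:Z %| a * b)%Z) => [hab|nab]; first exact: B2.
  case: (boolP (l%:Z %| k)%Z) => [hk|nk]; first exact: B5.
  have aux : forall X : int, (l%:Z %| - (3 ^+ 5 * (X * (a * b * k ^+ 3))))%Z -> (l%:Z %| X)%Z.
    move=> X; rewrite rpredN pdvdM // [(_ %| X * _)%Z]pdvdM // [(_ %| a * b * _)%Z]pdvdM //.
    case/orP => [/(pdvd3 pl) e|/orP[//|/orP[hab|/(pdvdX pl) hk]]].
    - by rewrite e eqxx in l3.
    - by rewrite hab in nab.
    - by rewrite hk in nk.
  exfalso; apply: (AD_prime _ pl); apply: aux.
    by move: hZ; congr (_ %| _)%Z; ring.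
  by move: hY; congr (_ %| _)%Z; ring.
have [w [w0 hw]] := sq_3k pr p8 p3 k0 pk ov B5.
have ha : toFp p a != 0.
  rewrite /toFp -(dvdz_pcharf (pchar_Fp pr)); apply/negP => pa.
  exact: (pdvd_gcd pP gap pa (dvdzz _)).
have hb : toFp p b != 0.
  rewrite /toFp -(dvdz_pcharf (pchar_Fp pr)); apply/negP => pb.
  exact: (pdvd_gcd pP gbp pb (dvdzz _)).
have F2 := Fp2 pr p8.
have F3 := Fp3 pr p3.
set h := w^-1.
have e1 : 3%:R * toFp p k * h ^+ 2 = 1.
  by rewrite /toFp hw /h exprVn mulfV // expf_neq0.
have hA : toFp p A * 2%:R = - (9%:R * toFp p b ^+ 2).
  have := congr1 (toFp p) hS; rewrite /toFp !(intrB, intrM, intrX', intrZ, intrR).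
  by rewrite (pchar_Fp_0 pr) mul0r sub0r => <-.
split.
  exists (nat_of_ord h)%:Z.
  have hH : toFp p (nat_of_ord h)%:Z = h by rewrite /toFp intrZ natr_Zp.
  split.
    rewrite (dvdz_pcharf (pchar_Fp pr)) -/(toFp p _).
    rewrite /toFp !(intrB, intrM, intrX', intrZ, intrR) natr_Zp.
    apply/eqP; rewrite /toFp in e1.
    transitivity (3%:R * a%:~R * b%:~R * (1 - (3%:R * k%:~R * h ^+ 2) ^+ 3) : 'F_p).
      by ring.
    by rewrite e1 expr1n subrr mulr0.
  move=> zeta _ z3; rewrite (cube1 pr p8 p3 z3) mul1r.
  rewrite hH /toFp !(intrM, intrX', intrZ, intrR) -/(toFp p A) -/(toFp p k).
  set Af := toFp p A; set kf := toFp p k; set bf := toFp p b.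
  have -> : Af + 9%:R * (Af * 2%:R) * kf ^+ 2 * h ^+ 4 = Af * 3%:R.
    transitivity (Af * (1 + 2%:R * (3%:R * kf * h ^+ 2) ^+ 2)); first by ring.
    by rewrite e1; ring.
  have [i hi] := sq_m1 pr p8 p3; have [r hr] := sq_2 pr p8 p3.
  have Af0 : Af != 0.
    apply/eqP => Af0; move: hA; rewrite -/Af -/bf Af0 mul0r => /eqP; rewrite eq_sym oppr_eq0.
    rewrite mulf_eq0 expf_eq0 /= (negbTE hb) orbF.
    by rewrite -[9%:R]/((3 * 3)%N%:R : 'F_p) natrM mulf_eq0 orbb (negbTE F3).
  set t := 3%:R * bf * (i * r) / 2%:R.
  have hAt : Af = t ^+ 2.
    apply: (mulIf F2); rewrite hA /t expr_div_n !exprMn hi hr.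
    rewrite -/bf; field; by rewrite -[4%:R]/((2 * 2)%N%:R : 'F_p) natrM mulf_neq0.
  have t0 : t != 0 by apply: contraNneq Af0 => t0; rewrite hAt t0 expr0n.
  split; first by rewrite mulf_neq0.
  case=> y hy; apply: (nsq_3 pr p8 p3); exists (y / t).
  by rewrite expr_div_n hy hAt [t ^+ 2 * _]mulrC mulfK // expf_neq0.
move=> _; split; [|split].
- rewrite /vadic.
  have ga : (0 < `|a|)%N by rewrite absz_gt0.
  have gb : (0 < `|b|)%N by rewrite absz_gt0.
  have l81 : logn 3 (absz (81 : int)) = 4%N by [].
  have l3 : logn 3 (absz (3 : int)) = 1%N by [].
  have gk : (0 < `|k|)%N by rewrite absz_gt0.
  rewrite !abszM !lognM ?muln_gt0 ?ga ?gb ?gk // l81 l3.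
  move: vn; rewrite /k; move: (logn 3 _) (logn 3 `|a|) (logn 3 `|b|) => v x y vn; clear -vn; lia.
- apply/negP => h3.
  have h3A : (3 %| A)%Z.
    rewrite (_ : A = (A + 9 * (A * 2) * k ^+ 2) - 3 * (6 * A * k ^+ 2)); last by ring.
    by rewrite rpredB // dvdz_mulr.
  have : (3%:Z %| P * a ^+ 2)%Z.
    rewrite (_ : P * a ^+ 2 = A * 2 + 3 * (3 * b ^+ 2)); last by rewrite -hS; ring.
    by rewrite rpredD ?dvdz_mulr ?dvdz_mull.
  rewrite pdvdM // => /orP[|/(pdvdX (isT : prime 3)) ha3].
    rewrite dvdzE /= => hp3; move: p3; move: hp3; rewrite /dvdn => /eqP ->; by [].
  exact: (pdvd_gcd (isT : prime 3) ga3 ha3 (dvdzz _)).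
- by rewrite -mulrA dvdz_mulr.
Qed.

Theorem lemma3p1 (p n : nat) (alpha beta kappa : int) :
  prime p -> (p %% 8 = 1)%N -> (p %% 3 = 2)%N -> (2 <= n)%N ->
  alpha != 0 -> beta != 0 -> kappa != 0 ->
  (* (B1) *)
  ~~ (2 %| alpha)%Z -> ~~ (2 %| beta)%Z ->
  gcdz alpha 3 = 1%N -> gcdz alpha p%:Z = 1%N -> gcdz alpha beta = 1%N ->
  gcdz beta p%:Z = 1%N ->
  (* (B2) *)
  (forall l : nat, prime l -> odd l -> l != 3%N ->
     (l%:Z %| alpha * beta)%Z -> sq_Ql l p%:Z) ->
  (* (B3) *)
  odd (logn 3 `|kappa|) -> (0 < logn 3 `|kappa|)%N ->
  (logn 3 `|kappa| < 2 * n - 1)%N ->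
  (* (B4) *)
  ~~ (p%:Z %| kappa)%Z ->
  (* (B5) *)
  (forall l : nat, prime l -> odd l -> l != 3%N ->
     (l%:Z %| kappa)%Z -> sq_Ql l p%:Z) ->
  HypFM p n
    ((p%:Z * alpha ^+ 2 - 9 * beta ^+ 2) %/ 2)%Z
    (9 * (p%:Z * alpha ^+ 2 - 9 * beta ^+ 2) * kappa ^+ 2)
    (9 * (p%:Z * alpha ^+ 2 + 9 * beta ^+ 2) * kappa ^+ 2)
    ((p%:Z * alpha ^+ 2 + 9 * beta ^+ 2) %/ 2)%Z
    (81 * alpha * beta * kappa ^+ 3)
    (18 * alpha * beta * kappa)
    (3 * alpha * beta).
Proof.
move=> pr p8 p3 n2 a0 b0 k0 a2 b2 ga3 gap gab gbp B2 ov v0 vn pk B5.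
have op : odd p by clear -p8; lia.
have [h1 h2] := two_dvd op a2 b2.
by apply: main_gen => //; rewrite divzK.
Qed.
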